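(* Let $(X,d)$ be a compact metric space and $F:X\to 2^X$ an expansive, upper semicontinuous set-valued map. If $F$ is open, then the shift $\sigma_{rF}:\mathrm{Orb}_r(X)\to\mathrm{Orb}_r(X)$ has the shadowing property (as a single-valued map on the metric space $(\mathrm{Orb}_r(X),\rho)$).
   Context: $X$ has diameter $1$; $2^X$ is the family of nonempty compact subsets of $X$. $F$ is upper semicontinuous if for every $x$ and open $U\supset F(x)$ there is a neighborhood $V$ of $x$ with $F(y)\subset U$ for $y\in V$. $F$ is open if $F(U)=\bigcup_{u\in U}F(u)$ is open for every open $U$. $\mathrm{Orb}_r(X)=\{(x_0,x_1,\dots)\in X^{\mathbb N}: x_{n+1}\in F(x_n)\ \forall n\}$ with metric $\rho((x_n),(y_n))=\sum_{n\ge0}d(x_n,y_n)/2^{n+1}$; $\sigma_{rF}((x_0,x_1,\dots))=(x_1,x_2,\dots)$. $F$ is expansive if there is $\delta>0$ such that for any $(x_n),(y_n)\in\mathrm{Orb}_r(X)$ with $d(x_n,y_n)<\delta$ for all $n$ one has $x_0=y_0$. A single-valued continuous map $g$ on a metric space $(Z,\rho)$ has the shadowing property if for every $\varepsilon>0$ there is $\delta>0$ such that for every sequence $\{z_n\}_{n\ge0}$ with $\rho(g(z_n),z_{n+1})<\delta$ there is $z\in Z$ with $\rho(g^n(z),z_n)<\varepsilon$ for all $n$. *)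

(* Defs.v *)
From Stdlib Require Import Reals List.
From Coquelicot Require Import Coquelicot.
Open Scope R_scope.

Section MetricDefs.
Context {X : Type} (d : X -> X -> R).

Definition is_metric : Prop :=
  (forall x y, 0 <= d x y) /\
  (forall x y, d x y = 0 <-> x = y) /\
  (forall x y, d x y = d y x) /\
  (forall x y z, d x z <= d x y + d y z).

Definition diameter_one : Prop :=
  (forall x y, d x y <= 1) /\
  (forall e, 0 < e -> exists x y, 1 - e < d x y).

Definition open_set (U : X -> Prop) : Prop :=
  forall x, U x -> exists r, 0 < r /\ forall y, d x y < r -> U y.

Definition compact_set (K : X -> Prop) : Prop :=
  forall (I : Type) (U : I -> X -> Prop),
    (forall i, open_set (U i)) ->
    (forall x, K x -> exists i, U i x) ->
    exists l : list I, forall x, K x -> exists i, In i l /\ U i x.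

Definition compact_space : Prop := compact_set (fun _ => True).

Definition values_in_2X (F : X -> X -> Prop) : Prop :=
  forall x, (exists y, F x y) /\ compact_set (F x).

Definition usc (F : X -> X -> Prop) : Prop :=
  forall x (U : X -> Prop), open_set U -> (forall y, F x y -> U y) ->
    exists r, 0 < r /\ forall x', d x x' < r -> forall y, F x' y -> U y.

Definition image_set (F : X -> X -> Prop) (U : X -> Prop) : X -> Prop :=
  fun y => exists u, U u /\ F u y.

Definition open_map (F : X -> X -> Prop) : Prop :=
  forall U, open_set U -> open_set (image_set F U).

Definition is_orbit (F : X -> X -> Prop) (x : nat -> X) : Prop :=
  forall n, F (x n) (x (S n)).

Definition expansive (F : X -> X -> Prop) : Prop :=
  exists delta, 0 < delta /\
    forall x y, is_orbit F x -> is_orbit F y ->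
      (forall n, d (x n) (y n) < delta) -> x 0%nat = y 0%nat.

Definition rho (x y : nat -> X) : R :=
  Series (fun n => d (x n) (y n) / 2 ^ (S n)).

End MetricDefs.

Definition shift {X : Type} (x : nat -> X) : nat -> X := fun n => x (S n).

Definition shadowing {Y : Type} (Z : Y -> Prop) (rho : Y -> Y -> R)
  (g : Y -> Y) : Prop :=
  forall eps, 0 < eps -> exists delta, 0 < delta /\
    forall z : nat -> Y, (forall n, Z (z n)) ->
      (forall n, rho (g (z n)) (z (S n)) < delta) ->
      exists w, Z w /\ forall n, rho (Nat.iter n g w) (z n) < eps.

(* Main.v *)
From Stdlib Require Import Reals List Lra Lia Classical ClassicalEpsilon.
From Coquelicot Require Import Coquelicot.
Require Import Defs.
Open Scope R_scope.

Section Gen.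
Context {X : Type} (d : X -> X -> R) (Hd : is_metric d).

Lemma dpos x y : 0 <= d x y. Proof. apply Hd. Qed.
Lemma dsym x y : d x y = d y x. Proof. apply Hd. Qed.
Lemma dtri x y z : d x z <= d x y + d y z. Proof. apply Hd. Qed.
Lemma dself x : d x x = 0. Proof. apply Hd; reflexivity. Qed.

Lemma ball_open a r : open_set d (fun y => d a y < r).
Proof. intros x Hx. exists (r - d a x). split. lra. intros y Hy.
  pose proof (dtri a x y). lra. Qed.

Lemma far_open y r : open_set d (fun z => r < d z y).
Proof. intros x Hx. exists (d x y - r). split. lra. intros z Hz.
  pose proof (dtri x z y). lra. Qed.

Lemma list_max_bound {A} (l : list A) (f : A -> nat) :
  exists M, forall i, In i l -> (f i <= M)%nat.
Proof. induction l as [|a l IH]. exists 0%nat; simpl; tauto.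
  destruct IH as [M HM]. exists (Nat.max (f a) M). intros i [->|H]. lia.
  specialize (HM i H); lia. Qed.

Definition conv (a : nat -> X) (x : X) :=
  forall r, 0 < r -> exists K, forall k, (K <= k)%nat -> d (a k) x < r.

Lemma inv_small r : 0 < r -> exists N, forall k, (N <= k)%nat -> / INR (S k) < r.
Proof. intros Hr. destruct (archimed_cor1 r Hr) as [N [HN HN0]]. exists N.
  intros k Hk. eapply Rle_lt_trans; [|exact HN]. apply Rinv_le_contravar.
  apply lt_0_INR; lia. apply le_INR; lia. Qed.

Lemma inv_pos k : 0 < / INR (S k).
Proof. apply Rinv_0_lt_compat, lt_0_INR; lia. Qed.

Section Comp.
Context (Hc : compact_space d).

Lemma cluster (s : nat -> X) :
  exists a, forall r, 0 < r -> forall M, exists n, (M <= n)%nat /\ d (s n) a < r.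
Proof.
  apply NNPP; intro Hn.
  assert (H: forall a, exists r M, 0 < r /\ forall n, (M <= n)%nat -> r <= d (s n) a).
  { intro a. apply NNPP; intro H1. apply Hn. exists a. intros r Hr M.
    apply NNPP; intro H2. apply H1. exists r, M. split; auto. intros n Hn'.
    apply Rnot_lt_le. intro H3. apply H2. exists n. auto. }
  pose (U := fun (i : X * R * nat) (y : X) =>
     0 < snd (fst i) /\ (forall n, (snd i <= n)%nat -> snd (fst i) <= d (s n) (fst (fst i)))
     /\ d (fst (fst i)) y < snd (fst i)).
  destruct (Hc (X * R * nat)%type U) as [l Hl].
  - intros [[a r] M] x [Hr [HM Hx]]; simpl in *. exists (r - d a x). split; [lra|].
    intros y Hy. split; [auto|split;[auto|]]. simpl. pose proof (dtri a x y); lra.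
  - intros x _. destruct (H x) as [r [M [Hr HM]]]. exists (x, r, M).
    unfold U; simpl. rewrite dself. auto.
  - destruct (list_max_bound l (fun i => snd i)) as [K HK].
    destruct (Hl (s K) I) as [[[a r] M] [Hin [Hr [HM Hx]]]]. simpl in *.
    specialize (HK _ Hin); simpl in HK. specialize (HM K HK). rewrite dsym in Hx. lra.
Qed.

Lemma subseq (s : nat -> X) :
  exists (phi : nat -> nat) a, (forall k, (k <= phi k)%nat) /\ conv (fun k => s (phi k)) a.
Proof.
  destruct (cluster s) as [a Ha].
  assert (Hch: forall k : nat, exists n, (k <= n)%nat /\ d (s n) a < / INR (S k)).
  { intro k. apply Ha. apply inv_pos. }
  exists (fun k => proj1_sig (constructive_indefinite_description _ (Hch k))), a.
  split.
  - intro k. exact (proj1 (proj2_sig (constructive_indefinite_description _ (Hch k)))).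
  - intros r Hr. destruct (inv_small r Hr) as [N HN]. exists N. intros k Hk.
    eapply Rlt_trans. exact (proj2 (proj2_sig (constructive_indefinite_description _ (Hch k)))).
    auto.
Qed.

Fixpoint psi (sub : (nat -> X) -> (nat -> nat) * X) (s : nat -> nat -> X) (j : nat)
  : nat -> nat :=
  match j with
  | O => fun k => k
  | S j' => fun k => psi sub s j' (fst (sub (fun k => s (psi sub s j' k) j')) k)
  end.

Lemma diag (s : nat -> nat -> X) :
  exists (D : nat -> nat) (A : nat -> X), (forall n, (n <= D n)%nat) /\
    forall i, conv (fun n => s (D n) i) (A i).
Proof.
  assert (Hsub: forall t : nat -> X, {pa : (nat -> nat) * X |
     (forall k, (k <= fst pa k)%nat) /\ conv (fun k => t (fst pa k)) (snd pa)}).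
  { intro t. apply constructive_indefinite_description.
    destruct (subseq t) as [phi [a H]]. exists (phi, a). exact H. }
  pose (sub := fun t => proj1_sig (Hsub t)).
  assert (Hs : forall t, (forall k, (k <= fst (sub t) k)%nat) /\ conv (fun k => t (fst (sub t) k)) (snd (sub t))).
  { intro t. exact (proj2_sig (Hsub t)). }
  clearbody sub.
  assert (Hge : forall j k, (k <= psi sub s j k)%nat).
  { induction j; intro k; simpl. lia.
    apply Nat.le_trans with (fst (sub (fun k => s (psi sub s j k) j)) k).
    apply (proj1 (Hs _)). apply IHj. }
  assert (Hfac : forall m i k, exists k', (k <= k')%nat /\ psi sub s (m + S i) k = psi sub s (S i) k').
  { induction m; intros i k. exists k. split; auto.
    change (psi sub s (S (m + S i)) k) with
      (psi sub s (m + S i) (fst (sub (fun k => s (psi sub s (m + S i) k) (m + S i)%nat)) k)).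
    destruct (IHm i (fst (sub (fun k => s (psi sub s (m + S i) k) (m + S i)%nat)) k)) as [k' [Hk' E]].
    exists k'. split; auto.
    apply Nat.le_trans with (fst (sub (fun k => s (psi sub s (m + S i) k) (m + S i)%nat)) k).
    apply (proj1 (Hs _)). exact Hk'. }
  exists (fun n => psi sub s (S n) n), (fun i => snd (sub (fun k => s (psi sub s i k) i))).
  split. intro n. apply Hge.
  intros i r Hr. destruct (proj2 (Hs (fun k => s (psi sub s i k) i)) r Hr) as [K HK].
  exists (Nat.max i K). intros n Hn.
  destruct (Hfac (n - i)%nat i n) as [k' [Hk' E]].
  replace (S n) with (n - i + S i)%nat by lia. rewrite E. apply HK. lia.
Qed.


Lemma sep (K : X -> Prop) y : compact_set d K -> ~ K y ->
  exists r, 0 < r /\ forall z, K z -> r <= d z y.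
Proof.
  intros HK Hy.
  destruct (HK nat (fun n z => / INR (S n) < d z y)) as [l Hl].
  - intro n. apply far_open.
  - intros z Hz. assert (0 < d z y).
    { destruct (dpos z y) as [H|H]; auto. exfalso. apply Hy.
      assert (z = y) by (apply Hd; auto). subst; auto. }
    destruct (inv_small (d z y) H) as [N HN]. exists N. apply HN. lia.
  - destruct (list_max_bound l (fun n => n)) as [M HM]. exists (/ INR (S M)).
    split. apply inv_pos. intros z Hz. destruct (Hl z Hz) as [n [Hn H]].
    left. eapply Rle_lt_trans; [|exact H]. apply Rinv_le_contravar.
    apply lt_0_INR; lia. apply le_INR. specialize (HM n Hn). lia.
Qed.

Context (F : X -> X -> Prop) (HF : values_in_2X d F) (Husc : usc d F).

Lemma closed_graph (a b : nat -> X) x y : conv a x -> conv b y ->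
  (exists K, forall k, (K <= k)%nat -> F (a k) (b k)) -> F x y.
Proof.
  intros Ha Hb [KF HKF]. apply NNPP; intro Hn.
  destruct (sep (F x) y (proj2 (HF x)) Hn) as [r [Hr Hz]].
  destruct (Husc x (fun z => r/2 < d z y) (far_open y (r/2))) as [rho [Hrho Hu]].
  { intros z Hz'. specialize (Hz z Hz'). lra. }
  destruct (Ha rho Hrho) as [Ka HKa]. destruct (Hb (r/2) ltac:(lra)) as [Kb HKb].
  pose (k := (Ka + Kb + KF)%nat).
  assert (H1 := HKa k ltac:(unfold k; lia)). assert (H2 := HKb k ltac:(unfold k; lia)).
  assert (H3 := HKF k ltac:(unfold k; lia)).
  rewrite dsym in H1. specialize (Hu (a k) H1 (b k) H3). lra.
Qed.

Context (Hopen : open_map d F).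

Lemma unif_open eta : 0 < eta -> exists g, 0 < g /\ g <= eta /\
  forall x y y', F x y -> d y y' < g -> exists x', d x x' < eta /\ F x' y'.
Proof.
  intros He. apply NNPP; intro Hn.
  pose (P := fun k (p : X * X * X) => F (fst (fst p)) (snd (fst p)) /\
     d (snd (fst p)) (snd p) < / INR (S k) /\
     forall x', d (fst (fst p)) x' < eta -> ~ F x' (snd p)).
  assert (H: forall k:nat, exists p, P k p).
  { intro k. apply NNPP; intro Hk. apply Hn. exists (Rmin eta (/ INR (S k))).
    split. apply Rmin_glb_lt; auto using inv_pos. split. apply Rmin_l.
    intros x y y' Hxy Hyy. apply NNPP; intro Hx'. apply Hk. exists (x,y,y').
    unfold P; simpl. split; auto. split.
    eapply Rlt_le_trans; [exact Hyy| apply Rmin_r].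
    intros x' H1 H2. apply Hx'. exists x'; auto. }
  pose (p := fun k => proj1_sig (constructive_indefinite_description _ (H k))).
  assert (Hp : forall k, P k (p k)) by (intro k; exact (proj2_sig (constructive_indefinite_description _ (H k)))).
  clearbody p.
  pose (s := fun k (i : nat) => match i with O => fst (fst (p k)) | S O => snd (fst (p k)) | _ => snd (p k) end).
  destruct (diag s) as [D [A [HD HA]]].
  assert (HF0 : F (A 0%nat) (A 1%nat)).
  { apply (closed_graph (fun n => s (D n) 0%nat) (fun n => s (D n) 1%nat)).
    apply HA. apply HA. exists 0%nat. intros k _. simpl. apply (Hp (D k)). }
  destruct (Hopen (fun z => d (A 0%nat) z < eta/2) (ball_open _ _) (A 1%nat)) as [rho [Hrho Hr]].
  { exists (A 0%nat). rewrite dself. split; auto; lra. }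
  destruct (HA 0%nat (eta/2) ltac:(lra)) as [K0 HK0].
  destruct (HA 1%nat (rho/2) ltac:(lra)) as [K1 HK1].
  destruct (inv_small (rho/2) ltac:(lra)) as [N HN].
  pose (n := (K0 + K1 + N)%nat).
  assert (A0 := HK0 n ltac:(unfold n; lia)). assert (A1 := HK1 n ltac:(unfold n; lia)).
  assert (HN' := HN (D n) ltac:(specialize (HD n); unfold n in *; lia)).
  destruct (Hp (D n)) as [P1 [P2 P3]]. simpl in A0, A1.
  destruct (Hr (snd (p (D n)))) as [u [Hu1 Hu2]].
  { pose proof (dtri (A 1%nat) (snd (fst (p (D n)))) (snd (p (D n)))).
    rewrite dsym in A1. lra. }
  apply (P3 u). pose proof (dtri (fst (fst (p (D n)))) (A 0%nat) u). lra. exact Hu2.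
Qed.


Lemma even_double n : Nat.even (2 * n) = true.
Proof. rewrite Nat.even_mul. reflexivity. Qed.
Lemma even_sdouble n : Nat.even (S (2 * n)) = false.
Proof. rewrite Nat.even_succ, Nat.odd_mul. reflexivity. Qed.

Lemma unif_exp (de : R) (Hde : 0 < de)
  (Hexp : forall x y, is_orbit F x -> is_orbit F y ->
      (forall n, d (x n) (y n) < de) -> x 0%nat = y 0%nat) :
  forall eta, 0 < eta -> exists N, forall a b,
    (forall i, (i < N)%nat -> F (a i) (a (S i))) ->
    (forall i, (i < N)%nat -> F (b i) (b (S i))) ->
    (forall i, (i <= N)%nat -> d (a i) (b i) <= de/2) -> d (a 0%nat) (b 0%nat) < eta.
Proof.
  intros eta He. apply NNPP; intro Hn.
  pose (P := fun N (ab : (nat -> X) * (nat -> X)) =>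
    (forall i, (i < N)%nat -> F (fst ab i) (fst ab (S i))) /\
    (forall i, (i < N)%nat -> F (snd ab i) (snd ab (S i))) /\
    (forall i, (i <= N)%nat -> d (fst ab i) (snd ab i) <= de/2) /\
    eta <= d (fst ab 0%nat) (snd ab 0%nat)).
  assert (H: forall N, exists ab, P N ab).
  { intro N. apply NNPP; intro HN. apply Hn. exists N. intros a b H1 H2 H3.
    apply Rnot_le_lt. intro H4. apply HN. exists (a,b). unfold P; simpl; auto. }
  pose (p := fun k => proj1_sig (constructive_indefinite_description _ (H k))).
  assert (Hp : forall k, P k (p k)) by (intro k; exact (proj2_sig (constructive_indefinite_description _ (H k)))).
  clearbody p.
  pose (s := fun k (i : nat) => if Nat.even i then fst (p k) (Nat.div2 i) else snd (p k) (Nat.div2 i)).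
  destruct (diag s) as [D [L [HD HL]]].
  assert (Ha : forall i, conv (fun n => fst (p (D n)) i) (L (2 * i)%nat)).
  { intros i r Hr. destruct (HL (2*i)%nat r Hr) as [K HK]. exists K. intros k Hk.
    specialize (HK k Hk). unfold s in HK. rewrite even_double, Nat.div2_double in HK. exact HK. }
  assert (Hb : forall i, conv (fun n => snd (p (D n)) i) (L (S (2 * i)))).
  { intros i r Hr. destruct (HL (S (2*i)) r Hr) as [K HK]. exists K. intros k Hk.
    specialize (HK k Hk). unfold s in HK. rewrite even_sdouble, Nat.div2_succ_double in HK. exact HK. }
  assert (HA : is_orbit F (fun i => L (2 * i)%nat)).
  { intro i. apply (closed_graph (fun n => fst (p (D n)) i) (fun n => fst (p (D n)) (S i))); auto.
    exists (S i). intros k Hk. apply (Hp (D k)). specialize (HD k). lia. }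
  assert (HB : is_orbit F (fun i => L (S (2 * i)))).
  { intro i. apply (closed_graph (fun n => snd (p (D n)) i) (fun n => snd (p (D n)) (S i))); auto.
    exists (S i). intros k Hk. apply (Hp (D k)). specialize (HD k). lia. }
  assert (Hclose : forall i, d (L (2 * i)%nat) (L (S (2 * i))) < de).
  { intro i. destruct (Ha i (de/8) ltac:(lra)) as [K1 H1]. destruct (Hb i (de/8) ltac:(lra)) as [K2 H2].
    pose (k := (K1 + K2 + i)%nat).
    specialize (H1 k ltac:(unfold k; lia)). specialize (H2 k ltac:(unfold k; lia)).
    assert (H3 : d (fst (p (D k)) i) (snd (p (D k)) i) <= de/2).
    { apply (Hp (D k)). specialize (HD k). unfold k in *; lia. }
    pose proof (dtri (L (2*i)%nat) (fst (p (D k)) i) (L (S (2 * i)))) as T1.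
    pose proof (dtri (fst (p (D k)) i) (snd (p (D k)) i) (L (S (2 * i)))) as T2.
    rewrite (dsym (L (2*i)%nat) (fst (p (D k)) i)) in T1. lra. }
  assert (E := Hexp _ _ HA HB Hclose). simpl in E.
  destruct (Ha 0%nat (eta/4) ltac:(lra)) as [K1 H1]. destruct (Hb 0%nat (eta/4) ltac:(lra)) as [K2 H2].
  pose (k := (K1 + K2)%nat).
  specialize (H1 k ltac:(unfold k; lia)). specialize (H2 k ltac:(unfold k; lia)).
  simpl in H1, H2. rewrite E in H1.
  destruct (Hp (D k)) as [_ [_ [_ H4]]].
  pose proof (dtri (fst (p (D k)) 0%nat) (L 1%nat) (snd (p (D k)) 0%nat)) as T1.
  rewrite (dsym (L 1%nat)) in T1. lra.
Qed.

Definition pseudo (e : R) (x : nat -> X) :=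
  forall n, exists y, F (x n) y /\ d (x (S n)) y < e.

Lemma pseudo_mono e e' x : e <= e' -> pseudo e x -> pseudo e' x.
Proof. intros He H n. destruct (H n) as [y [H1 H2]]. exists y. split; auto; lra. Qed.

Lemma segV : forall N e, 0 < e -> exists e', 0 < e' /\ forall x, pseudo e' x -> forall j,
  exists v, (forall k, (j <= k < j + N)%nat -> F (v k) (v (S k))) /\
            (forall k, (j <= k <= j + N)%nat -> d (v k) (x k) < e).
Proof.
  induction N as [|N IH]; intros e He.
  - exists e. split; auto. intros x _ j. exists x. split. intros; lia.
    intros k _. rewrite dself. auto.
  - destruct (unif_open e He) as [g [Hg [Hge HOg]]].
    destruct (IH (g/2) ltac:(lra)) as [e' [He' HV]].
    exists (Rmin e' (g/2)). split. apply Rmin_glb_lt; lra.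
    intros x Hx j.
    destruct (HV x (pseudo_mono _ _ _ (Rmin_l _ _) Hx) (S j)) as [v [Hv1 Hv2]].
    destruct (Hx j) as [y [Hy1 Hy2]].
    assert (Hm := Rmin_r e' (g/2)).
    destruct (HOg (x j) y (v (S j)) Hy1) as [x' [Hx1 Hx2]].
    { pose proof (dtri y (x (S j)) (v (S j))). specialize (Hv2 (S j) ltac:(lia)).
      rewrite (dsym y), (dsym (x (S j))) in *. lra. }
    exists (fun k => if Nat.eqb k j then x' else v k). split.
    + intros k Hk. destruct (Nat.eqb_spec k j).
      * subst. destruct (Nat.eqb_spec (S j) j). lia. auto.
      * destruct (Nat.eqb_spec (S k) j). lia. apply Hv1. lia.
    + intros k Hk. destruct (Nat.eqb_spec k j).
      * subst. rewrite dsym. auto.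
      * specialize (Hv2 k ltac:(lia)). lra.
Qed.


Lemma shadowX (de : R) (Hde : 0 < de)
  (Hexp : forall x y, is_orbit F x -> is_orbit F y ->
      (forall n, d (x n) (y n) < de) -> x 0%nat = y 0%nat) :
  forall th, 0 < th -> exists dl, 0 < dl /\ forall x, pseudo dl x ->
    exists W, is_orbit F W /\ forall n, d (W n) (x n) < th.
Proof.
  intros th Hth.
  destruct (unif_open (de/4) ltac:(lra)) as [ga [Hga [Hgal HOa]]].
  pose (beta := Rmin th ga / 2).
  assert (Hb1 : 0 < beta) by (unfold beta; pose proof (Rmin_glb_lt th ga 0 Hth Hga); lra).
  assert (Hb2 : beta <= ga / 2) by (unfold beta; pose proof (Rmin_r th ga); lra).
  assert (Hb3 : beta < th) by (unfold beta; pose proof (Rmin_l th ga); lra).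
  destruct (unif_exp de Hde Hexp (beta/2) ltac:(lra)) as [N HN].
  destruct (segV N (beta/2) ltac:(lra)) as [e' [He' HV]].
  exists (Rmin e' beta). split. apply Rmin_glb_lt; lra.
  intros x Hx.
  assert (Hx' : pseudo e' x) by (apply (pseudo_mono (Rmin e' beta)); [apply Rmin_l|exact Hx]).
  assert (Hm := Rmin_r e' beta).
  assert (Claim : forall m t, (t <= m)%nat -> exists w,
     (forall k, (m - t <= k < m + N)%nat -> F (w k) (w (S k))) /\
     (forall k, (m - t <= k <= m + N)%nat -> d (w k) (x k) < beta)).
  { intro m. induction t as [|t IHt]; intro Ht.
    - destruct (HV x Hx' m) as [v [Hv1 Hv2]]. exists v. split; intros k Hk.
      apply Hv1; lia. specialize (Hv2 k ltac:(lia)); lra.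
    - destruct (IHt ltac:(lia)) as [w [Hw1 Hw2]].
      pose (k0 := (m - S t)%nat). assert (Hk0e : k0 = (m - S t)%nat) by reflexivity.
      clearbody k0.
      destruct (Hx k0) as [y [Hy1 Hy2]].
      destruct (HOa (x k0) y (w (S k0)) Hy1) as [x' [Hx1 Hx2]].
      { pose proof (dtri y (x (S k0)) (w (S k0))) as T.
        assert (HH : (m - t <= S k0 <= m + N)%nat). { clear - Ht Hk0e. lia. } specialize (Hw2 (S k0) HH).
        rewrite (dsym y (x (S k0))), (dsym (x (S k0)) (w (S k0))) in T. lra. }
      pose (w' := fun k => if Nat.eqb k k0 then x' else w k).
      destruct (HV x Hx' k0) as [v [Hv1 Hv2]].
      assert (Hcw : d (w' (k0 + 0)%nat) (v (k0 + 0)%nat) < beta / 2).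
      { apply (HN (fun i => w' (k0 + i)%nat) (fun i => v (k0 + i)%nat)).
        - intros i Hi. rewrite Nat.add_succ_r. unfold w'.
          destruct (Nat.eqb_spec (k0 + i) k0).
          + destruct (Nat.eqb_spec (S (k0 + i)) k0). lia.
            replace (S (k0 + i)) with (S k0) by lia. exact Hx2.
          + destruct (Nat.eqb_spec (S (k0 + i)) k0). lia. apply Hw1. lia.
        - intros i Hi. rewrite Nat.add_succ_r. apply Hv1. lia.
        - intros i Hi. specialize (Hv2 (k0 + i)%nat ltac:(lia)).
          pose proof (dtri (w' (k0 + i)%nat) (x (k0 + i)%nat) (v (k0 + i)%nat)) as T.
          rewrite (dsym (x (k0 + i)%nat)) in T.
          assert (d (w' (k0 + i)%nat) (x (k0 + i)%nat) < de / 4).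
          { unfold w'. destruct (Nat.eqb_spec (k0 + i) k0).
            + rewrite e, dsym. exact Hx1.
            + specialize (Hw2 (k0 + i)%nat ltac:(lia)). lra. }
          lra. }
      rewrite Nat.add_0_r in Hcw. unfold w' in Hcw. rewrite Nat.eqb_refl in Hcw.
      exists w'. split.
      + intros k Hk. unfold w'. destruct (Nat.eqb_spec k k0).
        * subst k. destruct (Nat.eqb_spec (S k0) k0). lia. exact Hx2.
        * destruct (Nat.eqb_spec (S k) k0). lia. apply Hw1. lia.
      + intros k Hk. unfold w'. destruct (Nat.eqb_spec k k0).
        * subst k. specialize (Hv2 k0 ltac:(lia)).
          pose proof (dtri x' (v k0) (x k0)). lra.
        * apply Hw2. lia. }
  assert (Hfin : forall m, exists w, (forall k, (k < m)%nat -> F (w k) (w (S k))) /\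
     (forall k, (k <= m)%nat -> d (w k) (x k) < beta)).
  { intro m. destruct (Claim m m (le_n m)) as [w [Hw1 Hw2]]. exists w.
    split; intros k Hk; [apply Hw1|apply Hw2]; lia. }
  pose (wm := fun m => proj1_sig (constructive_indefinite_description _ (Hfin m))).
  assert (Hwm : forall m, (forall k, (k < m)%nat -> F (wm m k) (wm m (S k))) /\
     (forall k, (k <= m)%nat -> d (wm m k) (x k) < beta))
    by (intro m; exact (proj2_sig (constructive_indefinite_description _ (Hfin m)))).
  clearbody wm.
  destruct (diag wm) as [D [W [HD HW]]].
  exists W. split.
  - intro i. apply (closed_graph (fun n => wm (D n) i) (fun n => wm (D n) (S i))); auto.
    exists (S i). intros k Hk. apply (Hwm (D k)). specialize (HD k). lia.
  - intro n. apply Rle_lt_trans with beta; auto. apply Rnot_lt_le. intro Hlt.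
    destruct (HW n (d (W n) (x n) - beta) ltac:(lra)) as [K HK].
    specialize (HK (K + n)%nat ltac:(lia)). simpl in HK.
    assert (H2 := proj2 (Hwm (D (K + n)%nat)) n ltac:(specialize (HD (K+n)%nat); lia)).
    pose proof (dtri (W n) (wm (D (K + n)%nat) n) (x n)) as T.
    rewrite (dsym (W n) (wm (D (K + n)%nat) n)) in T. lra.
Qed.

End Comp.
End Gen.

Lemma geom_S q : 0 <= q < 1 -> is_series (fun k => q ^ (S k)) (q * / (1 - q)).
Proof. intros Hq. apply (is_series_scal_l q (fun k => q ^ k)). apply is_series_geom.
  rewrite Rabs_pos_eq; lra. Qed.

Lemma geom_ex q : 0 <= q < 1 -> ex_series (fun k => q ^ k).
Proof. intros Hq. eexists. apply is_series_geom. rewrite Rabs_pos_eq; lra. Qed.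

Lemma Series_zero : Series (fun _ : nat => 0) = 0.
Proof. transitivity (Series (fun _ : nat => 0 * 0)). apply Series_ext; intro; ring.
  rewrite (Series_scal_l 0 (fun _ => 0)). ring. Qed.

Lemma term_le (a : nat -> R) : (forall k, 0 <= a k <= (/2) ^ k) -> forall i, a i <= Series a.
Proof.
  intros Ha i.
  assert (Hex : ex_series a).
  { apply (ex_series_le a (fun k => (/2) ^ k)).
    intro n. change (norm (a n)) with (Rabs (a n)). rewrite Rabs_pos_eq; apply Ha.
    apply geom_ex; lra. }
  rewrite (Series_incr_n a (S i)); [|lia|exact Hex]. simpl Init.Nat.pred.
  assert (0 <= Series (fun k => a (S i + k)%nat)).
  { rewrite <- Series_zero. apply Series_le. intro n. split. lra. apply Ha.
    apply (ex_series_le (fun k => a (S i + k)%nat) (fun k => (/2) ^ k)). intro n.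
    change (norm (a (S i + n)%nat)) with (Rabs (a (S i + n)%nat)).
    rewrite Rabs_pos_eq by apply Ha. apply Rle_trans with ((/2) ^ (S i + n)). apply Ha.
    rewrite pow_add. assert (0 < (/2)^n) by (apply pow_lt; lra).
    assert ((/2)^(S i) <= 1).
    { clear. induction (S i). simpl; lra. simpl. assert (0 <= (/2)^n) by (apply pow_le; lra). nra. }
    nra. apply geom_ex; lra. }
  assert (a i <= sum_f_R0 a i).
  { destruct i. simpl. lra. simpl. pose proof (cond_pos_sum a i (fun k => proj1 (Ha k))). lra. }
  lra.
Qed.

Lemma pow_le1 x m : 0 <= x <= 1 -> x ^ m <= 1.
Proof. intros Hx. induction m. simpl; lra. simpl. assert (0 <= x ^ m) by (apply pow_le; lra). nra. Qed.

Lemma wt_bound t k : 0 <= t <= 1 -> 0 <= t / 2 ^ (S k) <= (/2) ^ k.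
Proof. intros Ht. rewrite pow_inv. simpl. assert (0 < 2 ^ k) by (apply pow_lt; lra).
  set (p := 2 ^ k) in *. assert (0 < / p) by (apply Rinv_0_lt_compat; lra).
  unfold Rdiv. rewrite Rinv_mult. split. apply Rmult_le_pos. lra.
  apply Rmult_le_pos; lra. nra. Qed.

Lemma iter_shift {X : Type} (W : nat -> X) n k : Nat.iter n shift W k = W (n + k)%nat.
Proof. revert k. induction n; intro k. reflexivity.
  simpl. unfold shift at 1. rewrite IHn. f_equal. lia. Qed.

Theorem theorem3p8 (X : Type) (d : X -> X -> R) (F : X -> X -> Prop)
  (Hd : is_metric d) (Hdiam : diameter_one d) (Hcomp : compact_space d)
  (HF : values_in_2X d F) (Husc : usc d F) (Hexp : expansive d F)
  (Hopen : open_map d F) :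
  shadowing (is_orbit F) (rho d) shift.
Proof.
  intros eps Heps. destruct Hexp as [de [Hde Hexp']].
  destruct (shadowX d Hd Hcomp F HF Husc Hopen de Hde Hexp' (eps/4) ltac:(lra)) as [dl [Hdl Hsh]].
  destruct (pow_lt_1_zero (2/3) ltac:(rewrite Rabs_pos_eq; lra) (eps/6) ltac:(lra)) as [N0 HN0].
  pose (mu := (2/3) ^ N0).
  assert (Hmu : 0 <= mu < eps/6).
  { specialize (HN0 N0 (le_n _)). rewrite Rabs_pos_eq in HN0. unfold mu; split; auto.
    apply pow_le; lra. apply pow_le; lra. }
  pose (P := 2 ^ (S N0)). assert (HP : 0 < P) by (apply pow_lt; lra).
  pose (Q := INR N0 + 1). assert (HQ : 0 < Q) by (unfold Q; pose proof (pos_INR N0); lra).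
  pose (delta := Rmin (dl/2) (eps / (4 * Q * P))).
  assert (Hdel : 0 < delta).
  { apply Rmin_glb_lt. lra. apply Rdiv_lt_0_compat; [lra|]. apply Rmult_lt_0_compat; lra. }
  assert (Hdel2 : delta * (4 * Q * P) <= eps).
  { apply Rle_trans with (eps / (4 * Q * P) * (4 * Q * P)).
    apply Rmult_le_compat_r. apply Rmult_le_pos; lra. apply Rmin_r.
    right. field. split; lra. }
  assert (Hdel1 : delta <= dl/2) by apply Rmin_l.
  exists delta. split; auto. intros z Hz Hps.
  assert (dle1 : forall x y, 0 <= d x y <= 1) by (intros; split; [apply (dpos d Hd)|apply Hdiam]).
  assert (Hterm : forall n i, d (z n (S i)) (z (S n) i) < delta * 2 ^ (S i)).
  { intros n i. specialize (Hps n). unfold rho, shift in Hps.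
    assert (T := term_le (fun k => d (z n (S k)) (z (S n) k) / 2 ^ S k)
                   (fun k => wt_bound _ k (dle1 _ _)) i). cbv beta in T.
    assert (0 < 2 ^ S i) by (apply pow_lt; lra).
    assert (d (z n (S i)) (z (S n) i) / 2 ^ S i < delta) by lra.
    apply (Rmult_lt_compat_r (2 ^ S i)) in H0; auto.
    unfold Rdiv in H0. rewrite Rmult_assoc, Rinv_l in H0; lra. }
  destruct (Hsh (fun n => z n 0%nat)) as [W [HW HWd]].
  { intro n. exists (z n 1%nat). split. apply (Hz n 0%nat).
    specialize (Hterm n 0%nat). simpl in Hterm. rewrite (dsym d Hd). lra. }
  assert (Hchain : forall k n, (k <= N0)%nat -> d (z n k) (z (n + k)%nat 0%nat) <= INR k * (P * delta)).
  { induction k; intros n Hk.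
    - rewrite Nat.add_0_r, (dself d Hd). simpl; lra.
    - pose proof (dtri d Hd (z n (S k)) (z (S n) k) (z (n + S k)%nat 0%nat)) as T.
      specialize (IHk (S n) ltac:(lia)). replace (S n + k)%nat with (n + S k)%nat in IHk by lia.
      assert (2 ^ S k <= P) by (apply Rle_pow; [lra|lia]).
      specialize (Hterm n k). rewrite S_INR. nra. }
  assert (HPd : 0 < P * delta) by (apply Rmult_lt_0_compat; lra).
  exists W. split; auto. intro n.
  unfold rho.
  pose (b := fun k => eps/2 * (/2) ^ (S k) + mu * (3/4) ^ (S k)).
  assert (Hb : is_series b (eps/2 * (/2 * / (1 - /2)) + mu * (3/4 * / (1 - 3/4)))).
  { apply (is_series_plus (fun k => eps/2 * (/2) ^ (S k)) (fun k => mu * (3/4) ^ (S k))).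
    apply (is_series_scal_l (eps/2) (fun k => (/2) ^ (S k))). apply geom_S; lra.
    apply (is_series_scal_l mu (fun k => (3/4) ^ (S k))). apply geom_S; lra. }
  apply Rle_lt_trans with (Series b).
  - apply Series_le; [|eexists; exact Hb]. intro k. rewrite iter_shift.
    assert (0 < 2 ^ S k) by (apply pow_lt; lra).
    assert (Hk2 : / 2 ^ S k = (/2) ^ S k) by (rewrite pow_inv; reflexivity).
    assert (0 <= (3/4) ^ S k) by (apply pow_le; lra).
    assert (0 <= d (W (n + k)%nat) (z n k) / 2 ^ S k).
    { unfold Rdiv. apply Rmult_le_pos. apply dle1. left; apply Rinv_0_lt_compat; lra. }
    split; auto. unfold b. unfold Rdiv. rewrite Hk2.
    assert (0 < (/2) ^ S k) by (apply pow_lt; lra).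
    destruct (Nat.le_gt_cases N0 k) as [HkN|HkN].
    + assert (E : (/2) ^ S k = (2/3) ^ S k * (3/4) ^ S k).
      { rewrite <- Rpow_mult_distr. f_equal. field. }
      assert ((2/3) ^ S k <= mu).
      { unfold mu. replace (S k) with (N0 + (S k - N0))%nat by lia. rewrite pow_add.
        assert (0 <= (2/3) ^ N0) by (apply pow_le; lra).
        assert ((2/3) ^ (S k - N0) <= 1) by (apply pow_le1; lra). nra. }
      assert (0 <= (2/3) ^ S k) by (apply pow_le; lra).
      pose proof (dle1 (W (n + k)%nat) (z n k)). rewrite E. nra.
    + pose proof (HWd (n + k)%nat) as G1. simpl in G1.
      pose proof (Hchain k n ltac:(lia)) as G2.
      assert (INR k <= INR N0) by (apply le_INR; lia).
      assert (G3 : INR k * (P * delta) < eps / 4).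
      { assert (4 * Q * (P * delta) <= eps) by (rewrite <- Rmult_assoc; lra). unfold Q in *.
        pose proof (pos_INR k). nra. }
      pose proof (dtri d Hd (W (n + k)%nat) (z (n + k)%nat 0%nat) (z n k)) as T.
      rewrite (dsym d Hd (z (n + k)%nat 0%nat) (z n k)) in T.
      assert (0 <= mu * (3/4) ^ S k) by (apply Rmult_le_pos; lra).
      nra.
  - rewrite (is_series_unique b _ Hb). replace (eps / 2 * (/ 2 * / (1 - / 2)) + mu * (3 / 4 * / (1 - 3 / 4))) with (eps/2 + 3 * mu) by field. lra.
Qed.
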